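(* Let $n\ge1$ and $\kappa\in I'_n$. Then $$\frac{1}{(2\pi)^n}\,c^{(n)}_\kappa\,\mathbf{e}\!\left[\frac12\sum_{l=1}^n\left(\omega^{(n)}_{\kappa,l}-\frac12\right)\right]\frac{1}{d_n}\,c^{(n)}_{d_n-\kappa}=\frac{1}{d_n}\,p_n\!\left(\mathbf{e}\!\left[(-1)^{n-1}\omega^{(n)}_{\kappa,1}\right]\right).$$
   Context: Fix integers $a_1,\dots,a_n\ge2$, $d_0=1$, $d_i=a_1\cdots a_i$, $\mathbf{e}[\alpha]=\exp(2\pi\sqrt{-1}\alpha)$. $I'_n=\{\kappa\in\{1,\dots,d_n\}\mid a_n\nmid\kappa\}$ (note $d_n-\kappa\in I'_n$ for $\kappa\in I'_n$). For $\kappa\in I'_n$, $\omega^{(n)}_{\kappa,i}=(-1)^{i-1}\frac{d_{i-1}}{d_n}\kappa-\lfloor(-1)^{i-1}\frac{d_{i-1}}{d_n}\kappa\rfloor$; $c^{(n)}_\kappa=\prod_{l=1}^n\Gamma(1-\omega^{(n)}_{\kappa,l})\cdot\prod_{i=1}^m(1-\mathbf{e}[\omega^{(n)}_{\kappa,2i-1}])$ if $n=2m-1$ and $c^{(n)}_\kappa=\prod_{l=1}^n\Gamma(1-\omega^{(n)}_{\kappa,l})\cdot\prod_{i=1}^m(1-\mathbf{e}[\omega^{(n)}_{\kappa,2i}])$ if $n=2m$. $p_n(t)=\prod_{i=1}^n(1-t^{d_{i-1}})^{(-1)^{n-i}}$ (a polynomial in $t$). *)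

(* Defs.v *)
From Stdlib Require Import Reals Lra Lia.
From Coquelicot Require Import Coquelicot.
Open Scope R_scope.

(* Euler Gamma function on the reals: Gamma x = int_0^oo t^(x-1) e^(-t) dt
   (used only at arguments x in (0,1], where the integral converges). *)
Definition Gamma (x : R) : R :=
  RInt_gen (fun t => Rpower t (x - 1) * exp (- t)) (at_right 0) (Rbar_locally p_infty).

Definition ee (alpha : R) : C := (cos (2 * PI * alpha), sin (2 * PI * alpha)).

Definition frac (x : R) : R := x - IZR (Int_part x).

Fixpoint cprod (k : nat) (f : nat -> C) : C :=
  match k with O => RtoC 1 | S k' => Cmult (cprod k' f) (f k) end.

Fixpoint dd (a : nat -> nat) (i : nat) : nat :=
  match i with O => 1%nat | S i' => (dd a i' * a i)%nat end.

Definition omega (a : nat -> nat) (n kappa i : nat) : R :=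
  frac ((-1) ^ (i - 1) * INR (dd a (i - 1)) / INR (dd a n) * INR kappa).

Definition cc (a : nat -> nat) (n kappa : nat) : C :=
  Cmult (cprod n (fun l => RtoC (Gamma (1 - omega a n kappa l))))
    (if Nat.odd n then
       cprod ((n + 1) / 2) (fun i => Cminus (RtoC 1) (ee (omega a n kappa (2 * i - 1))))
     else
       cprod (n / 2) (fun i => Cminus (RtoC 1) (ee (omega a n kappa (2 * i))))).

(* p_n(t) = prod_{i=1}^n (1 - t^{d_{i-1}})^{(-1)^{n-i}}, evaluated as a rational
   function (exponent -1 = complex inverse). *)
Definition pp (a : nat -> nat) (n : nat) (t : C) : C :=
  cprod n (fun i =>
    let b := Cminus (RtoC 1) (Cpow t (dd a (i - 1))) in
    if Nat.even (n - i) then b else Cinv b).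

(* Main.v *)
Require Import Defs.
From Stdlib Require Import Reals Lra Lia Factorial ZArith.
From Coquelicot Require Import Coquelicot.
Open Scope R_scope.

Definition pw (y t : R) : R := exp (y * ln t).

Fixpoint pr (y : R) (m : nat) : R :=
  match m with O => y | S m' => y * pr (y + 1) m' end.

Lemma pr_pos : forall m y, 0 < y -> 0 < pr y m.
Proof. induction m; intros y Hy; simpl; [lra|]. apply Rmult_lt_0_compat; [lra| apply IHm; lra]. Qed.

Lemma pr_S : forall m y, pr y (S m) = pr y m * (y + INR (S m)).
Proof.
  induction m; intros y.
  - simpl. ring.
  - change (pr y (S (S m))) with (y * pr (y+1) (S m)).
    rewrite IHm. change (pr y (S m)) with (y * pr (y+1) m).
    rewrite !S_INR. ring.
Qed.

Lemma pw_pos : forall y t, 0 < pw y t.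
Proof. intros; apply exp_pos. Qed.

Lemma pw_plus : forall y z t, pw (y + z) t = pw y t * pw z t.
Proof. intros; unfold pw; rewrite <- exp_plus; f_equal; ring. Qed.

Lemma pw_1 : forall t, 0 < t -> pw 1 t = t.
Proof. intros; unfold pw; rewrite Rmult_1_l; apply exp_ln; auto. Qed.

Lemma pw_0 : forall t, pw 0 t = 1.
Proof. intros; unfold pw; rewrite Rmult_0_l; apply exp_0. Qed.

Lemma pw_S : forall y t, 0 < t -> pw (y + 1) t = pw y t * t.
Proof. intros; rewrite pw_plus, pw_1; auto. Qed.

Lemma pw_le1 : forall y t, 0 <= y -> 0 < t <= 1 -> pw y t <= 1.
Proof.
  intros y t Hy Ht. unfold pw. rewrite <- exp_0.
  destruct (Req_dec (y * ln t) 0) as [E|E]; [rewrite E; lra|].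
  left; apply exp_increasing.
  assert (ln t <= 0). { rewrite <- ln_1. apply ln_le; lra. }
  nra.
Qed.

Lemma pw_mono_exp : forall y z t, y <= z -> 1 <= t -> pw y t <= pw z t.
Proof.
  intros y z t Hyz Ht. unfold pw.
  assert (0 <= ln t). { rewrite <- ln_1. apply ln_le; lra. }
  destruct (Req_dec (y * ln t) (z * ln t)) as [E|E]; [rewrite E; lra|].
  left; apply exp_increasing. nra.
Qed.

Lemma pw_mono_base : forall y s t, 0 <= y -> 0 < s <= t -> pw y s <= pw y t.
Proof.
  intros y s t Hy Hst. unfold pw.
  assert (ln s <= ln t) by (apply ln_le; lra).
  destruct (Req_dec (y * ln s) (y * ln t)) as [E|E]; [rewrite E; lra|].
  left; apply exp_increasing. nra.
Qed.

Lemma is_derive_pw : forall y t, 0 < t -> is_derive (pw y) t (y * pw (y - 1) t).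
Proof.
  intros y t Ht. unfold pw. auto_derive; [lra|].
  replace ((y - 1) * ln t) with (y * ln t + - ln t) by ring.
  rewrite exp_plus, exp_Ropp, exp_ln by lra. field. lra.
Qed.

Lemma continuous_pw : forall y t, 0 < t -> continuous (pw y) t.
Proof. intros. apply (ex_derive_continuous (K:=R_AbsRing) (V:=R_NormedModule)). eexists; apply is_derive_pw; auto. Qed.

Lemma Rplus_minus_1 : forall y, y + 1 - 1 = y.
Proof. intros; ring. Qed.

Lemma exp_m1 : forall y t, 0 < t -> exp ((y - 1) * ln t) = exp (y * ln t) / t.
Proof.
  intros. replace ((y - 1) * ln t) with (y * ln t + - ln t) by ring.
  rewrite exp_plus, exp_Ropp, exp_ln by lra. field. lra.
Qed.

Ltac cont := apply (ex_derive_continuous (K:=R_AbsRing) (V:=R_NormedModule)); unfold pw; auto_derive.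

Lemma R_plus_eq : forall x y : R, plus x y = x + y. Proof. reflexivity. Qed.
Lemma R_minus_eq : forall x y : R, minus x y = x - y. Proof. reflexivity. Qed.
Lemma R_scal_eq : forall x y : R, scal x y = x * y. Proof. reflexivity. Qed.

Lemma pow_le1 : forall u k, 0 <= u <= 1 -> u ^ k <= 1.
Proof. intros u k Hu; induction k; simpl; [lra|]. assert (0 <= u^k) by (apply pow_le; lra). nra. Qed.

Lemma K_rec (N : R) (HN : 0 < N) : forall m : nat, INR m <= N -> forall y a, 0 < y -> 0 < a <= 1 -> a <= N ->
  exists E, 0 <= E <= pw y a * (INR m + 1) / y /\
   is_RInt (fun t => pw (y-1) t * (1 - t/N)^m) a N (pw y N * INR (fact m) / pr y m - E).
Proof.
  induction m; intros Hm y a Hy Ha HaN.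
  - exists (pw y a / y). split.
    + simpl. split; [apply Rlt_le, Rdiv_lt_0_compat; [apply pw_pos|lra] | right; field; lra].
    + assert (H := is_RInt_derive (fun t => pw y t / y) (fun t => pw (y-1) t * (1 - t/N)^0) a N).
      rewrite R_minus_eq in H. simpl pr. simpl fact.
      replace (pw y N * INR 1 / y - pw y a / y) with (pw y N / y - pw y a / y) by (simpl; field; lra).
      apply H.
      * intros t Ht. rewrite Rmin_left, Rmax_right in Ht by lra.
        unfold pw. auto_derive; [lra|]. rewrite exp_m1 by lra. simpl. field. lra.
      * intros t Ht. rewrite Rmin_left, Rmax_right in Ht by lra. cont. lra.
  - assert (HmN : INR m <= N) by (rewrite S_INR in Hm; lra).
    destruct (IHm HmN (y+1) a ltac:(lra) Ha HaN) as [E' [HE' HI]].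
    rewrite Rplus_minus_1 in HI.
    set (c := INR (S m) / (y * N)).
    assert (Hc : 0 <= c) by (unfold c; apply Rmult_le_pos; [apply pos_INR| apply Rlt_le, Rinv_0_lt_compat; nra]).
    set (F := fun t => pw y t / y * (1 - t/N)^(S m)).
    set (F' := fun t => pw (y-1) t * (1 - t/N)^(S m) - c * (pw y t * (1 - t/N)^m)).
    assert (H1 : is_RInt F' a N (minus (F N) (F a))).
    { apply (is_RInt_derive F F').
      - intros t Ht. rewrite Rmin_left, Rmax_right in Ht by lra.
        unfold F, F', c, pw. auto_derive; [lra|].
        rewrite exp_m1 by lra.
        change (match m with 0%nat => 1 | S _ => INR m + 1 end) with (INR (S m)).
        rewrite <- ?tech_pow_Rmult, ?S_INR. unfold Rminus, Rdiv. field. lra.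
      - intros t Ht. rewrite Rmin_left, Rmax_right in Ht by lra. unfold F'. cont. lra. }
    assert (H2 := is_RInt_scal _ _ _ c _ HI).
    assert (H3 := is_RInt_plus _ _ _ _ _ _ H1 H2).
    set (E := pw y a / y * (1 - a/N)^(S m) + c * E').
    exists E. split.
    + assert (P0 : 0 <= 1 - a/N) by (apply Rmult_le_reg_r with N; [lra|]; field_simplify; lra).
      assert (P1 : 0 <= (1 - a/N)^(S m)) by (apply pow_le; lra).
      assert (P2 : (1 - a/N)^(S m) <= 1) by (apply pow_le1; split; [lra|]; assert (0 < a/N) by (apply Rdiv_lt_0_compat; lra); lra).
      assert (Hp := pw_pos y a).
      assert (HS : pw (y+1) a = pw y a * a) by (apply pw_S; lra).
      assert (Hm1 : 0 <= INR m) by apply pos_INR.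
      assert (HE'2 : E' <= pw y a * (INR m + 1)).
      { destruct HE' as [_ HE']. eapply Rle_trans; [exact HE'|]. rewrite HS.
        assert (Ha1 : a/(y+1) <= 1) by (apply Rmult_le_reg_r with (y+1); [lra|]; field_simplify; lra).
        replace (pw y a * a * (INR m + 1) / (y + 1)) with ((pw y a * (INR m + 1)) * (a/(y+1))) by (field; lra).
        rewrite <- (Rmult_1_r (pw y a * (INR m + 1))) at 2. apply Rmult_le_compat_l; [nra|lra]. }
      assert (Hc2 : c <= / y).
      { unfold c. rewrite S_INR in *. apply Rmult_le_reg_r with (y * N); [nra|].
        field_simplify; [|lra|lra]. nra. }
      unfold E. split.
      * apply Rplus_le_le_0_compat; [|nra]. apply Rmult_le_pos; [|lra]. apply Rlt_le, Rdiv_lt_0_compat; lra.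
      * assert (pw y a / y * (1 - a / N) ^ S m <= pw y a / y).
        { rewrite <- (Rmult_1_r (pw y a / y)) at 2. apply Rmult_le_compat_l; [|lra]. apply Rlt_le, Rdiv_lt_0_compat; lra. }
        assert (c * E' <= / y * (pw y a * (INR m + 1))).
        { apply Rmult_le_compat; try lra. }
        rewrite S_INR. unfold Rdiv in *. nra.
    + replace (pw y N * INR (fact (S m)) / pr y (S m) - E) with
        (plus (minus (F N) (F a)) (scal c (pw (y + 1) N * INR (fact m) / pr (y + 1) m - E'))).
      * eapply is_RInt_ext; [|exact H3]. intros t _. unfold F'. cbv beta. change (plus ?u ?v) with (Rplus u v); change (scal ?u ?v) with (Rmult u v). match type of (eq_refl t) with _ => idtac end. unfold Rminus. simpl. ring.
      * rewrite R_plus_eq, R_minus_eq, R_scal_eq. unfold F, E, c.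
        replace (1 - N/N) with 0 by (field; lra). rewrite pow_i by lia.
        rewrite pw_S by lra.
        change (fact (S m)) with (S m * fact m)%nat. rewrite mult_INR.
        change (pr y (S m)) with (y * pr (y+1) m).
        assert (0 < pr (y+1) m) by (apply pr_pos; lra).
        match goal with |- @eq _ ?l ?r => change (@eq R l r) end.
        field. repeat split; lra.
Qed.

Lemma exp_pow_nat : forall u k, exp u ^ k = exp (u * INR k).
Proof.
  intros u k; induction k.
  - simpl. rewrite Rmult_0_r, exp_0. reflexivity.
  - rewrite S_INR. simpl. rewrite IHk, <- exp_plus. f_equal. ring.
Qed.

Lemma bern : forall h k, 0 <= h <= 1 -> 1 - INR k * h <= (1 - h) ^ k.
Proof.
  intros h k Hh; induction k.
  - simpl. lra.
  - rewrite S_INR. simpl. assert (0 <= (1-h)^k) by (apply pow_le; lra).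
    assert (0 <= INR k) by apply pos_INR.
    destruct (Rle_dec 0 (1 - INR k * h)).
    + nra.
    + nra.
Qed.

Section Approx.
Variable K : nat.
Hypothesis HK : (1 <= K)%nat.
Let N := INR K.
Lemma N_pos : 0 < N.
Proof. unfold N. apply lt_0_INR. lia. Qed.

Lemma approx1 : forall t, 0 <= t <= N -> (1 - t/N)^K <= exp (- t).
Proof.
  intros t Ht. assert (HN := N_pos).
  assert (0 <= 1 - t/N) by (apply Rmult_le_reg_r with N; [lra|]; field_simplify; lra).
  replace (exp (-t)) with (exp (- t / N) ^ K).
  - apply pow_incr. split; auto. assert (Hq := exp_ineq1_le (- t / N)). unfold Rdiv in *. lra.
  - rewrite exp_pow_nat. f_equal. fold N. field. lra.
Qed.

Lemma approx2 : forall t, 0 <= t <= N -> exp (- t) - (1 - t/N)^K <= t^2 * exp (- t) / N.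
Proof.
  intros t Ht. assert (HN := N_pos).
  assert (H0 : 0 <= 1 - t/N) by (apply Rmult_le_reg_r with N; [lra|]; field_simplify; lra).
  assert (H1 : (1 + t/N)^K <= exp t).
  { replace (exp t) with (exp (t / N) ^ K).
    - apply pow_incr. split. assert (0 <= t/N) by (apply Rdiv_le_0_compat; lra). lra.
      apply exp_ineq1_le.
    - rewrite exp_pow_nat. f_equal. fold N. field. lra. }
  assert (H2 : 1 - t^2 / N <= (1 + t/N)^K * (1 - t/N)^K).
  { rewrite <- Rpow_mult_distr.
    replace ((1 + t/N) * (1 - t/N)) with (1 - (t/N)^2) by (field; lra).
    replace (1 - t^2/N) with (1 - INR K * (t/N)^2) by (fold N; field; lra).
    apply bern. split. apply pow2_ge_0.
    replace ((t/N)^2) with ((t/N) * (t/N)) by ring.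
    assert (0 <= t/N <= 1) by (split; [apply Rdiv_le_0_compat; lra| apply Rmult_le_reg_r with N; [lra|]; field_simplify; lra]).
    nra. }
  assert (H3 : 0 <= (1 - t/N)^K) by (apply pow_le; lra).
  assert (H4 : 1 - t^2/N <= exp t * (1 - t/N)^K) by nra.
  assert (He := exp_pos (-t)).
  assert (H5 : exp (-t) * exp t = 1) by (rewrite <- exp_plus; replace (-t+t) with 0 by ring; apply exp_0).
  assert (exp (-t) * (1 - t^2/N) <= exp (-t) * (exp t * (1 - t/N)^K)) by (apply Rmult_le_compat_l; lra).
  replace (exp (-t) * (exp t * (1 - t/N)^K)) with ((1 - t/N)^K) in H by (rewrite <- Rmult_assoc, H5; ring).
  unfold Rdiv in *. nra.
Qed.
End Approx.

Definition gf (x t : R) : R := Rpower t (x - 1) * exp (- t).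
Definition Jx (x : R) (n : nat) : R := pw x (INR (S n)) * INR (fact (S n)) / pr x (S n).

Lemma gf_cont : forall x t, 0 < t -> continuous (gf x) t.
Proof. intros. unfold gf, Rpower. cont. lra. Qed.

Lemma exRc : forall (f : R -> R) a b, (forall z, Rmin a b <= z <= Rmax a b -> continuous f z) -> ex_RInt f a b.
Proof. intros. apply (ex_RInt_continuous (V:=R_CompleteNormedModule)). auto. Qed.

Lemma gf_ex : forall x a b, 0 < a -> a <= b -> ex_RInt (gf x) a b.
Proof. intros. apply exRc. intros z Hz. rewrite Rmin_left, Rmax_right in Hz by lra. apply gf_cont. lra. Qed.

Lemma eqR : forall (l r : R), l = r -> @eq R l r. Proof. auto. Qed.

Lemma isR_ge0 : forall (f : R -> R) a b l, a <= b -> is_RInt f a b l -> (forall x, a < x < b -> 0 <= f x) -> 0 <= l.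
Proof.
  intros f a b l Hab H Hp. rewrite <- (is_RInt_unique _ _ _ _ H). apply RInt_ge_0; auto. eexists; eauto.
Qed.

Lemma CA : forall x n a b, 0 < x < 1 -> 0 < a <= 1 -> INR (S n) <= b ->
  Rabs (RInt (gf x) a b - Jx x n) <= 7 / INR (S n) + pw x a * (INR (S n) + 1) / x.
Proof.
  intros x n a b Hx Ha Hb.
  set (N := INR (S n)).
  assert (HN1 : 1 <= N) by (unfold N; rewrite S_INR; assert (0 <= INR n) by apply pos_INR; lra).
  assert (HaN : a <= N) by lra.
  assert (Ex1 : ex_RInt (gf x) a N) by (apply gf_ex; lra).
  assert (Ex2 : ex_RInt (gf x) N b) by (apply gf_ex; unfold N in *; lra).
  rewrite <- (RInt_Chasles (gf x) a N b Ex1 Ex2).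
  destruct (K_rec N ltac:(lra) (S n) (Rle_refl _) x a ltac:(lra) Ha HaN) as [E [HE HK]].
  fold N in HK.
  set (g := fun t => pw (x - 1) t * (1 - t / N) ^ S n) in HK.
  assert (Hf := RInt_correct (gf x) a N (gf_ex x a N ltac:(lra) HaN)).
  assert (HD := is_RInt_minus _ _ _ _ _ _ Hf HK).
  set (D := minus (RInt (gf x) a N) (pw x N * INR (fact (S n)) / pr x (S n) - E)) in HD.
  assert (Hpt : forall t, a < t < N -> 0 <= minus (gf x t) (g t) <= (1 + t^2) * exp (-t) / N).
  { intros t Ht. change (minus (gf x t) (g t)) with (gf x t - g t).
    unfold gf, g, Rpower. fold (pw (x-1) t).
    assert (A1 := approx1 (S n) ltac:(lia) t ltac:(fold N; lra)).
    assert (A2 := approx2 (S n) ltac:(lia) t ltac:(fold N; lra)). fold N in A1, A2.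
    assert (Hp := pw_pos (x-1) t).
    split. nra.
    assert (Hq : pw (x-1) t * t^2 <= 1 + t^2).
    { replace (pw (x-1) t * t^2) with (pw (x+1) t).
      - destruct (Rle_dec t 1).
        + assert (pw (x+1) t <= 1) by (apply pw_le1; lra). nra.
        + replace (t^2) with (pw 2 t).
          * assert (pw (x+1) t <= pw 2 t) by (apply pw_mono_exp; lra). lra.
          * replace 2 with (0 + 1 + 1) by ring. rewrite !pw_S, pw_0 by lra. ring.
      - replace (x+1) with (x - 1 + 1 + 1) by ring. rewrite !pw_S by lra. ring. }
    assert (He := exp_pos (-t)).
    apply Rle_trans with (pw (x-1) t * (t^2 * exp (-t) / N)).
    - apply Rle_trans with (pw (x - 1) t * (exp (- t) - (1 - t / N) ^ S n)); [right; ring|].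
      apply Rmult_le_compat_l; lra.
    - unfold Rdiv. replace (pw (x - 1) t * (t ^ 2 * exp (- t) * / N)) with ((pw (x-1) t * t^2) * (exp (-t) * / N)) by ring.
      replace ((1 + t ^ 2) * exp (- t) * / N) with ((1 + t^2) * (exp (-t) * /N)) by ring.
      apply Rmult_le_compat_r; [|lra]. apply Rmult_le_pos; [lra| apply Rlt_le, Rinv_0_lt_compat; lra]. }
  set (V := ((a^2 + 2*a + 3) * exp (-a) - (N^2 + 2*N + 3) * exp (-N)) / N).
  assert (HV : is_RInt (fun t => (1 + t^2) * exp (-t) / N) a N V).
  { assert (H := is_RInt_derive (fun t => - (t^2 + 2*t + 3) * exp (-t) / N) (fun t => (1 + t^2) * exp (-t) / N) a N).
    replace V with (minus (- (N^2 + 2*N + 3) * exp (-N) / N) (- (a^2 + 2*a + 3) * exp (-a) / N)).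
    apply H.
    - intros t _. auto_derive; [lra|]. field. lra.
    - intros t _. cont. lra.
    - unfold V. rewrite R_minus_eq. match goal with |- @eq _ ?l ?r => change (@eq R l r) end. field. lra. }
  assert (HD0 : 0 <= D) by (apply (isR_ge0 (fun y => minus (gf x y) (g y)) a N D); auto; intros; apply Hpt; auto).
  assert (HD1 : D <= V) by (apply (is_RInt_le (fun y => minus (gf x y) (g y)) (fun t => (1 + t ^ 2) * exp (- t) / N) a N D V); auto; intros; apply Hpt; auto).
  assert (HV6 : V <= 6 / N).
  { unfold V. assert (exp (-a) <= 1) by (rewrite <- exp_0; apply exp_le_3 || (destruct (Req_dec a 0); [subst; lra| left; apply exp_increasing; lra])).
    assert (0 < exp (-a)) by apply exp_pos. assert (0 < exp (-N)) by apply exp_pos.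
    assert ((a^2 + 2*a + 3) * exp (-a) <= 6) by nra.
    assert (0 <= (N^2 + 2*N + 3) * exp (-N)) by nra.
    unfold Rdiv. apply Rmult_le_compat_r; [apply Rlt_le, Rinv_0_lt_compat; lra | lra]. }
  assert (HI2 := RInt_correct _ _ _ Ex2).
  set (I2 := RInt (gf x) N b) in *.
  assert (HI20 : 0 <= I2).
  { apply (isR_ge0 (gf x) N b I2); [unfold N in *; lra| auto|]. intros t Ht. unfold gf, Rpower.
    apply Rmult_le_pos; apply Rlt_le, exp_pos. }
  assert (HI21 : I2 <= exp (-N) - exp (-b)).
  { assert (H := is_RInt_derive (fun t => - exp (-t)) (fun t => exp (-t)) N b).
    rewrite R_minus_eq in H.
    apply (is_RInt_le (gf x) (fun t => exp (-t)) N b); [unfold N in *; lra|auto| |].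
    - replace (exp (-N) - exp (-b)) with (- exp (-b) - - exp (-N)) by ring. apply H.
      + intros t _. auto_derive; auto. ring.
      + intros t _. cont. auto.
    - intros t Ht. unfold gf, Rpower. fold (pw (x-1) t).
      assert (pw (x-1) t <= pw 0 t) by (apply pw_mono_exp; lra). rewrite pw_0 in H0.
      assert (0 < exp (-t)) by apply exp_pos. nra. }
  assert (HeN : exp (-N) <= 1 / N).
  { assert (H := exp_ineq1_le N). rewrite exp_Ropp. unfold Rdiv. rewrite Rmult_1_l.
    apply Rinv_le_contravar; lra. }
  assert (Heb : 0 < exp (-b)) by apply exp_pos.
  unfold Jx. fold N.
  assert (HDe : D = RInt (gf x) a N - (pw x N * INR (fact (S n)) / pr x (S n) - E)) by reflexivity.
  rewrite R_plus_eq.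
  replace (RInt (gf x) a N + I2 - pw x N * INR (fact (S n)) / pr x (S n)) with (D + I2 - E) by (rewrite HDe; ring).
  fold N in HE. apply Rabs_le. unfold Rdiv in *. split; lra.
Qed.

Lemma ballR : forall (x y e : R), Rabs (y - x) < e -> ball x e y.
Proof. intros. exact H. Qed.

Lemma pw_small : forall x, 0 < x -> forall eta, 0 < eta -> exists d, 0 < d <= 1 /\ forall a, 0 < a <= d -> pw x a <= eta.
Proof.
  intros x Hx eta He. exists (Rmin 1 (exp (ln eta / x))). split.
  - split; [apply Rmin_pos; [lra| apply exp_pos] | apply Rmin_l].
  - intros a Ha. unfold pw.
    assert (H1 : a <= exp (ln eta / x)) by (eapply Rle_trans; [apply Ha| apply Rmin_r]).
    assert (H2 : ln a <= ln eta / x) by (rewrite <- (ln_exp (ln eta / x)); apply ln_le; lra).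
    rewrite <- (exp_ln eta) by lra.
    assert (x * ln a <= ln eta).
    { apply Rmult_le_compat_l with (r := x) in H2; [|lra]. replace (x * (ln eta / x)) with (ln eta) in H2 by (field; lra). lra. }
    destruct (Req_dec (x * ln a) (ln eta)) as [E|E]; [rewrite E; lra|]. left; apply exp_increasing; lra.
Qed.

Lemma INRS_ge1 : forall n, 1 <= INR (S n).
Proof. intros. rewrite S_INR. assert (0 <= INR n) by apply pos_INR. lra. Qed.

Lemma J_close : forall x, 0 < x < 1 -> forall n eps, 0 < eps -> exists d, 0 < d <= 1 /\ forall a b, 0 < a <= d -> INR (S n) <= b ->
   Rabs (RInt (gf x) a b - Jx x n) <= 7 / INR (S n) + eps.
Proof.
  intros x Hx n eps He.
  assert (H1 := INRS_ge1 n).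
  destruct (pw_small x ltac:(lra) (eps * x / (INR (S n) + 1))) as [d [Hd Hd2]].
  { apply Rdiv_lt_0_compat; nra. }
  exists d. split; auto. intros a b Ha Hb.
  eapply Rle_trans; [apply CA; auto; lra|].
  apply Rplus_le_compat_l.
  assert (pw x a <= eps * x / (INR (S n) + 1)) by (apply Hd2; auto).
  apply Rmult_le_reg_r with (x / (INR (S n) + 1)); [apply Rdiv_lt_0_compat; lra|].
  replace (pw x a * (INR (S n) + 1) / x * (x / (INR (S n) + 1))) with (pw x a) by (field; lra).
  replace (eps * (x / (INR (S n) + 1))) with (eps * x / (INR (S n) + 1)) by (field; lra). lra.
Qed.

Lemma J_cauchy : forall x, 0 < x < 1 -> forall n m, Rabs (Jx x n - Jx x m) <= 7 / INR (S n) + 7 / INR (S m).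
Proof.
  intros x Hx n m. apply Rle_plus_epsilon. intros eps He.
  destruct (J_close x Hx n (eps/2) ltac:(lra)) as [d1 [Hd1 H1]].
  destruct (J_close x Hx m (eps/2) ltac:(lra)) as [d2 [Hd2 H2]].
  set (a := Rmin d1 d2). set (b := INR (S n) + INR (S m)).
  assert (Ha1 : 0 < a <= d1) by (split; [apply Rmin_pos; lra| apply Rmin_l]).
  assert (Ha2 : 0 < a <= d2) by (split; [apply Rmin_pos; lra| apply Rmin_r]).
  assert (B1 := INRS_ge1 n). assert (B2 := INRS_ge1 m).
  specialize (H1 a b Ha1 ltac:(unfold b; lra)). specialize (H2 a b Ha2 ltac:(unfold b; lra)).
  replace (Jx x n - Jx x m) with (- (RInt (gf x) a b - Jx x n) + (RInt (gf x) a b - Jx x m)) by ring.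
  eapply Rle_trans; [apply Rabs_triang|]. rewrite Rabs_Ropp. lra.
Qed.

Lemma J_conv : forall x, 0 < x < 1 -> ex_finite_lim_seq (Jx x).
Proof.
  intros x Hx. apply ex_lim_seq_cauchy_corr.
  intros eps. destruct (INR_unbounded (14 / eps)) as [N0 HN0].
  exists N0. intros n m Hn Hm.
  eapply Rle_lt_trans; [apply J_cauchy; auto|].
  assert (He := cond_pos eps).
  assert (INR N0 <= INR n) by (apply le_INR; lia).
  assert (INR N0 <= INR m) by (apply le_INR; lia).
  assert (14 / eps < INR (S n)) by (rewrite S_INR; lra).
  assert (14 / eps < INR (S m)) by (rewrite S_INR; lra).
  assert (0 < 14/eps) by (apply Rdiv_lt_0_compat; lra).
  assert (7 / INR (S n) < eps / 2).
  { apply Rmult_lt_reg_r with (INR (S n) * 2 / eps); [apply Rdiv_lt_0_compat; lra|].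
    replace (7 / INR (S n) * (INR (S n) * 2 / eps)) with (14 / eps) by (field; lra).
    replace (eps / 2 * (INR (S n) * 2 / eps)) with (INR (S n)) by (field; lra). lra. }
  assert (7 / INR (S m) < eps / 2).
  { apply Rmult_lt_reg_r with (INR (S m) * 2 / eps); [apply Rdiv_lt_0_compat; lra|].
    replace (7 / INR (S m) * (INR (S m) * 2 / eps)) with (14 / eps) by (field; lra).
    replace (eps / 2 * (INR (S m) * 2 / eps)) with (INR (S m)) by (field; lra). lra. }
  lra.
Qed.

Lemma Gamma_lim : forall x, 0 < x < 1 -> is_lim_seq (Jx x) (Gamma x).
Proof.
  intros x Hx. destruct (J_conv x Hx) as [L HL].
  assert (HG : is_RInt_gen (gf x) (at_right 0) (Rbar_locally p_infty) L).
  { unfold is_RInt_gen. apply filterlimi_locally. intros eps.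
    assert (He := cond_pos eps).
    apply is_lim_seq_spec in HL. destruct (HL (mkposreal (eps/3) ltac:(lra))) as [N1 HN1]. simpl in HN1.
    destruct (INR_unbounded (21 / eps)) as [N2 HN2].
    set (n := max N1 N2).
    assert (Hn1 : Rabs (Jx x n - L) < eps / 3) by (apply HN1; unfold n; lia).
    assert (Hn2 : 7 / INR (S n) < eps / 3).
    { assert (INR N2 <= INR n) by (apply le_INR; unfold n; lia).
      assert (21 / eps < INR (S n)) by (rewrite S_INR; lra).
      assert (0 < 21/eps) by (apply Rdiv_lt_0_compat; lra).
      apply Rmult_lt_reg_r with (INR (S n) * 3 / eps); [apply Rdiv_lt_0_compat; lra|].
      replace (7 / INR (S n) * (INR (S n) * 3 / eps)) with (21 / eps) by (field; lra).
      replace (eps / 3 * (INR (S n) * 3 / eps)) with (INR (S n)) by (field; lra). lra. }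
    destruct (J_close x Hx n (eps/3) ltac:(lra)) as [d [Hd Hcl]].
    apply (Filter_prod _ _ _ (fun a => 0 < a <= d) (fun b => INR (S n) < b)).
    - exists (mkposreal d ltac:(lra)). intros y Hy Hpos. simpl in Hy.
      change (Rabs (y - 0) < d) in Hy. rewrite Rminus_0_r, Rabs_pos_eq in Hy by lra. lra.
    - exists (INR (S n)). auto.
    - intros a b Ha Hb. exists (RInt (gf x) a b). simpl. split.
      + apply (RInt_correct (V:=R_CompleteNormedModule)), gf_ex; assert (H1 := INRS_ge1 n); lra.
      + apply ballR. specialize (Hcl a b Ha ltac:(lra)).
        replace (RInt (gf x) a b - L) with ((RInt (gf x) a b - Jx x n) + (Jx x n - L)) by ring.
        eapply Rle_lt_trans; [apply Rabs_triang|]. lra. }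
  unfold Gamma. change (fun t => Rpower t (x - 1) * exp (- t)) with (gf x).
  rewrite (is_RInt_gen_unique _ _ HG). exact HL.
Qed.

Lemma incr_deriv : forall (F F' : R -> R) u, 0 <= u ->
  (forall v, 0 <= v <= u -> is_derive F v (F' v)) ->
  (forall v, 0 <= v <= u -> continuous F' v) ->
  (forall v, 0 < v < u -> 0 <= F' v) -> F 0 <= F u.
Proof.
  intros F F' u Hu Hd Hc Hp.
  assert (H := is_RInt_derive F F' 0 u).
  rewrite Rmin_left, Rmax_right in H by lra.
  specialize (H Hd Hc). rewrite R_minus_eq in H.
  assert (0 <= F u - F 0) by (apply (isR_ge0 F' 0 u); auto). lra.
Qed.

Lemma sin_le_id : forall u, 0 <= u -> sin u <= u.
Proof.
  intros u Hu. assert (H := incr_deriv (fun v => v - sin v) (fun v => 1 - cos v) u Hu).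
  simpl in H. rewrite sin_0 in H.
  assert (0 <= u - sin u); [|lra]. replace 0 with (0 - 0) by ring. apply H.
  - intros v _. auto_derive; auto. ring.
  - intros v _. cont. auto.
  - intros v _. assert (H1 := COS_bound v). lra.
Qed.

Lemma one_minus_cos : forall u, 0 <= u -> 1 - cos u <= u^2 / 2.
Proof.
  intros u Hu. assert (H := incr_deriv (fun v => v^2/2 - 1 + cos v) (fun v => v - sin v) u Hu).
  simpl in H. rewrite cos_0 in H.
  assert (0 <= u^2/2 - 1 + cos u); [|lra]. replace 0 with (0 * (0 * 1) / 2 - 1 + 1) by field. apply H.
  - intros v _. auto_derive; auto. field.
  - intros v _. cont. auto.
  - intros v Hv. assert (sin v <= v) by (apply sin_le_id; lra). lra.
Qed.

Lemma tcos_le_sin : forall t, 0 <= t <= PI -> t * cos t <= sin t.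
Proof.
  intros t Ht. assert (H := incr_deriv (fun v => sin v - v * cos v) (fun v => v * sin v) t ltac:(lra)).
  simpl in H. rewrite sin_0, cos_0 in H.
  assert (0 <= sin t - t * cos t); [|lra]. replace 0 with (0 - 0 * 1) by ring. apply H.
  - intros v _. auto_derive; auto. ring.
  - intros v _. cont. auto.
  - intros v Hv. apply Rmult_le_pos; [lra|]. apply sin_ge_0; lra.
Qed.

Definition wf (x : R) (m : nat) (t : R) : R := cos (x * t) * cos t ^ m.
Definition Aw (x : R) (m : nat) : R := RInt (wf x m) 0 (PI / 2).

Lemma PI2_pos : 0 < PI / 2.
Proof. assert (H := PI_RGT_0). lra. Qed.

Lemma wf_is : forall x m, is_RInt (wf x m) 0 (PI/2) (Aw x m).
Proof.
  intros. apply (RInt_correct (V:=R_CompleteNormedModule)). apply exRc. intros. unfold wf. cont; auto.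
Qed.

Lemma sc1 : forall t, sin t ^ 2 + cos t ^ 2 - 1 = 0.
Proof. intros. assert (H := sin2_cos2 t). unfold Rsqr in H. simpl. lra. Qed.

Lemma Aw_rec : forall x m, ((INR m + 2)^2 - x^2) * Aw x (S (S m)) = (INR m + 2) * (INR m + 1) * Aw x m.
Proof.
  intros x m.
  set (H := fun t => x * sin (x * t) * cos t ^ (S (S m)) - (INR m + 2) * cos (x * t) * cos t ^ (S m) * sin t).
  set (H' := fun t => (x^2 - (INR m + 2)^2) * wf x (S (S m)) t + (INR m + 2) * (INR m + 1) * wf x m t).
  assert (HD : is_RInt H' 0 (PI/2) (minus (H (PI/2)) (H 0))).
  { apply (is_RInt_derive H H').
    - intros t _. unfold H, H', wf. auto_derive; auto.
      change (match m with 0%nat => 1 | S _ => INR m + 1 end) with (INR (S m)).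
      rewrite <- ?tech_pow_Rmult, ?S_INR. 
      apply Rminus_diag_uniq.
      match goal with |- ?E = 0 => replace E with ((INR m+2)*(INR m+1)*cos(x*t)*cos t^m*(sin t^2 + cos t^2 - 1)) by ring end.
      rewrite sc1. ring.
    - intros t _. unfold H', wf. cont; auto. }
  assert (HC := is_RInt_plus _ _ _ _ _ _ (is_RInt_scal _ _ _ (x^2 - (INR m + 2)^2) _ (wf_is x (S (S m))))
                 (is_RInt_scal _ _ _ ((INR m + 2) * (INR m + 1)) _ (wf_is x m))).
  assert (HC' : is_RInt H' 0 (PI/2) (plus (scal (x^2 - (INR m + 2)^2) (Aw x (S (S m)))) (scal ((INR m + 2) * (INR m + 1)) (Aw x m)))).
  { eapply is_RInt_ext; [|exact HC]. intros. reflexivity. }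
  assert (E1 := is_RInt_unique _ _ _ _ HD). rewrite (is_RInt_unique _ _ _ _ HC') in E1.
  unfold H in E1. change (plus ?a ?b) with (Rplus a b) in E1. change (scal ?a ?b) with (Rmult a b) in E1.
  change (minus ?a ?b) with (Rminus a b) in E1.
  rewrite cos_PI2, sin_0, Rmult_0_r, sin_0 in E1. simpl in E1.
  match type of E1 with @eq _ ?l ?r => change (@eq R l r) in E1 end.
  lra.
Qed.

Lemma lim_from_bound : forall (u : nat -> R) (l c : R), (forall n, Rabs (u n - l) <= c / INR (S n)) -> is_lim_seq u l.
Proof.
  intros u l c H. apply is_lim_seq_spec. intros eps.
  assert (He := cond_pos eps).
  destruct (INR_unbounded (Rabs c / eps)) as [N HN]. exists N. intros n Hn.
  eapply Rle_lt_trans; [apply H|].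
  assert (INR N <= INR n) by (apply le_INR; lia).
  assert (Hs : Rabs c / eps < INR (S n)) by (rewrite S_INR; lra).
  assert (0 < INR (S n)) by (apply lt_0_INR; lia).
  apply Rle_lt_trans with (Rabs c / INR (S n)).
  - unfold Rdiv. apply Rmult_le_compat_r; [apply Rlt_le, Rinv_0_lt_compat; lra| apply Rle_abs].
  - apply Rmult_lt_reg_r with (INR (S n) / eps); [apply Rdiv_lt_0_compat; lra|].
    replace (Rabs c / INR (S n) * (INR (S n) / eps)) with (Rabs c / eps) by (field; lra).
    replace (eps * (INR (S n) / eps)) with (INR (S n)) by (field; lra). lra.
Qed.

Lemma Aw_0x : forall x, x <> 0 -> Aw x 0 = sin (x * (PI/2)) / x.
Proof.
  intros x Hx. unfold Aw. apply is_RInt_unique.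
  replace (sin (x * (PI/2)) / x) with (minus (sin (x * (PI/2)) / x) (sin (x * 0) / x)).
  - apply (is_RInt_derive (fun t => sin (x * t) / x) (wf x 0)).
    + intros t _. unfold wf. auto_derive; auto. simpl. field. auto.
    + intros t _. unfold wf. cont; auto.
  - rewrite Rmult_0_r, sin_0. change (minus ?a ?b) with (Rminus a b). match goal with |- @eq _ ?l ?r => change (@eq R l r) end. unfold Rdiv. ring.
Qed.

Lemma Aw_00 : Aw 0 0 = PI / 2.
Proof.
  unfold Aw. apply is_RInt_unique.
  assert (H : is_RInt (wf 0 0) 0 (PI/2) (minus (PI/2) 0)).
  { apply (is_RInt_derive (fun t => t) (wf 0 0)).
    + intros t _. unfold wf. auto_derive; auto. rewrite Rmult_0_l, cos_0. ring.
    + intros t _. unfold wf. cont; auto. }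
  change (minus ?a ?b) with (Rminus a b) in H. rewrite Rminus_0_r in H. exact H.
Qed.

Lemma Aw0_pos : forall N, 0 < Aw 0 (2 * N).
Proof.
  induction N.
  - simpl. rewrite Aw_00. apply PI2_pos.
  - replace (2 * S N)%nat with (S (S (2 * N))) by lia.
    assert (H := Aw_rec 0 (2 * N)). assert (0 <= INR (2 * N)) by apply pos_INR.
    assert (Aw 0 (S (S (2 * N))) = (INR (2 * N) + 2) * (INR (2 * N) + 1) * Aw 0 (2 * N) / (INR (2 * N) + 2) ^ 2).
    { rewrite <- H. field. lra. }
    rewrite H1. apply Rdiv_lt_0_compat; [|nra]. apply Rmult_lt_0_compat; auto. nra.
Qed.

Fixpoint Pp (y : R) (N : nat) : R :=
  match N with O => 1 | S N' => Pp y N' * (1 - y^2 / (INR (S N'))^2) end.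

Lemma Pp_inv : forall y, 0 < y < 1 -> forall N, Aw (2 * y) (2 * N) * Pp y N * (PI * y) = sin (PI * y) * Aw 0 (2 * N).
Proof.
  intros y Hy N. induction N.
  - simpl. rewrite Aw_0x, Aw_00 by lra. replace (2 * y * (PI/2)) with (PI * y) by field. field. lra.
  - replace (2 * S N)%nat with (S (S (2 * N))) by lia.
    assert (H1 := Aw_rec (2*y) (2 * N)). assert (H2 := Aw_rec 0 (2 * N)).
    rewrite mult_INR in H1, H2. replace (INR 2) with 2 in H1, H2 by (simpl; ring).
    assert (0 <= INR N) by apply pos_INR.
    change (Pp y (S N)) with (Pp y N * (1 - y^2/(INR (S N))^2)). rewrite S_INR.
    apply Rmult_eq_reg_r with ((2 * INR N + 2)^2); [|nra].
    replace (Aw (2 * y) (S (S (2 * N))) * (Pp y N * (1 - y ^ 2 / (INR N + 1) ^ 2)) * (PI * y) * (2 * INR N + 2) ^ 2)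
      with ((((2 * INR N + 2) ^ 2 - (2 * y) ^ 2) * Aw (2 * y) (S (S (2 * N)))) * Pp y N * (PI * y)) by (field; lra).
    rewrite H1.
    replace (sin (PI * y) * Aw 0 (S (S (2 * N))) * (2 * INR N + 2) ^ 2) with
      (sin (PI * y) * (((2 * INR N + 2) ^ 2 - 0 ^ 2) * Aw 0 (S (S (2 * N))))) by ring.
    rewrite H2. transitivity ((2 * INR N + 2) * (2 * INR N + 1) * (Aw (2 * y) (2 * N) * Pp y N * (PI * y))); [ring|]. rewrite IHN. ring.
Qed.

Lemma ratio_bound : forall x m, 0 <= x ->
  0 <= Aw 0 (S (S m)) - Aw x (S (S m)) <= (x^2/2) * (Aw 0 m - Aw 0 (S (S m))).
Proof.
  intros x m Hx.
  assert (H1 := is_RInt_minus _ _ _ _ _ _ (wf_is 0 (S (S m))) (wf_is x (S (S m)))).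
  assert (H2 := is_RInt_scal _ _ _ (x^2/2) _ (is_RInt_minus _ _ _ _ _ _ (wf_is 0 m) (wf_is 0 (S (S m))))).
  change (minus ?a ?b) with (Rminus a b) in H1, H2. change (scal ?a ?b) with (Rmult a b) in H2.
  assert (HP := PI2_pos).
  assert (Hpt : forall t, 0 < t < PI/2 -> 0 <= wf 0 (S (S m)) t - wf x (S (S m)) t <= x^2/2 * (wf 0 m t - wf 0 (S (S m)) t)).
  { intros t Ht. unfold wf. rewrite Rmult_0_l, cos_0.
    assert (Hc : 0 <= cos t) by (apply cos_ge_0; lra).
    assert (Hcm : 0 <= cos t ^ m) by (apply pow_le; auto).
    assert (Hcx := COS_bound (x * t)).
    assert (Hom := one_minus_cos (x * t) ltac:(nra)).
    assert (Hts : t * cos t <= sin t) by (apply tcos_le_sin; lra).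
    assert (0 <= t * cos t) by nra.
    simpl. split.
    - replace (1 * (cos t * (cos t * cos t ^ m)) - cos (x * t) * (cos t * (cos t * cos t ^ m))) with ((1 - cos (x*t)) * ((cos t * cos t) * cos t ^ m)) by ring.
      apply Rmult_le_pos; [lra|]. apply Rmult_le_pos; nra.
    - assert (E1 : 1 * (cos t * (cos t * cos t ^ m)) - cos (x * t) * (cos t * (cos t * cos t ^ m)) = (1 - cos (x*t)) * (cos t * cos t) * cos t ^ m) by ring.
      rewrite E1.
      apply Rle_trans with ((x*t)^2/2 * (cos t * cos t) * cos t ^ m).
      + apply Rmult_le_compat_r; auto. apply Rmult_le_compat_r; nra.
      + assert (E2 : (x * t) ^ 2 / 2 * (cos t * cos t) * cos t ^ m = x^2/2 * ((t * cos t) * (t * cos t)) * cos t ^ m) by field.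
        rewrite E2. assert (Hs := sin2_cos2 t). unfold Rsqr in Hs.
        apply Rle_trans with (x^2/2 * (sin t * sin t) * cos t ^ m).
        * apply Rmult_le_compat_r; auto. apply Rmult_le_compat_l; [nra|]. apply Rmult_le_compat; lra.
        * right. cbv beta. replace (sin t * sin t) with (1 - cos t * cos t) by lra. field. }
  split.
  - apply (isR_ge0 _ 0 (PI/2) _ ltac:(lra) H1). intros t Ht. apply Hpt; auto.
  - apply (is_RInt_le _ _ 0 (PI/2) _ _ ltac:(lra) H1 H2). intros t Ht. apply Hpt; auto.
Qed.

Lemma sine_prod : forall y, 0 < y < 1 -> is_lim_seq (Pp y) (sin (PI * y) / (PI * y)).
Proof.
  intros y Hy.
  assert (HPI := PI_RGT_0).
  assert (Hs : 0 < sin (PI * y)) by (apply sin_gt_0; nra).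
  set (r := fun N => Aw (2*y) (2 * S N) / Aw 0 (2 * S N)).
  assert (Hr : is_lim_seq r 1).
  { apply lim_from_bound with (c := 2 * y^2). intros N.
    unfold r. replace (2 * S N)%nat with (S (S (2 * N))) by lia.
    assert (Hb := ratio_bound (2 * y) (2 * N) ltac:(lra)).
    assert (Hrec := Aw_rec 0 (2 * N)).
    assert (Ha0 := Aw0_pos (S N)). replace (2 * S N)%nat with (S (S (2 * N))) in Ha0 by lia.
    rewrite mult_INR in Hrec. replace (INR 2) with 2 in Hrec by (simpl; ring).
    assert (HN : 0 <= INR N) by apply pos_INR.
    set (a0 := Aw 0 (S (S (2 * N)))) in *. set (a1 := Aw 0 (2 * N)) in *. set (a2 := Aw (2*y) (S (S (2 * N)))) in *.
    assert (Ediff : a1 - a0 = a0 / (2 * INR N + 1)).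
    { assert (a1 = a0 * (2 * INR N + 2) / (2 * INR N + 1)).
      { apply Rmult_eq_reg_r with ((2 * INR N + 2) * (2 * INR N + 1)); [|nra].
        replace (a1 * ((2 * INR N + 2) * (2 * INR N + 1))) with ((2 * INR N + 2) * (2 * INR N + 1) * a1) by ring.
        rewrite <- Hrec. field. lra. }
      rewrite H. field. lra. }
    rewrite Ediff in Hb.
    rewrite S_INR.
    assert (Q : a2/a0 - 1 = - ((a0 - a2)/a0)) by (field; lra).
    rewrite Q, Rabs_Ropp, Rabs_pos_eq.
    - apply Rle_trans with ((2*y)^2/2 * (a0/(2 * INR N + 1)) * / a0).
      + unfold Rdiv at 1. apply Rmult_le_compat_r; [apply Rlt_le, Rinv_0_lt_compat; lra| lra].
      + replace ((2*y)^2/2 * (a0/(2 * INR N + 1)) * / a0) with (2 * y^2 * / (2 * INR N + 1)) by (field; lra).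
        unfold Rdiv. apply Rmult_le_compat_l; [nra|]. apply Rinv_le_contravar; lra.
    - unfold Rdiv. apply Rmult_le_pos; [lra| apply Rlt_le, Rinv_0_lt_compat; lra]. }
  assert (Hne : forall N, Aw (2*y) (2 * S N) <> 0).
  { intros N E. assert (H := Pp_inv y Hy (S N)). rewrite E in H. assert (H0 := Aw0_pos (S N)).
    assert (0 < sin (PI * y) * Aw 0 (2 * S N)) by (apply Rmult_lt_0_compat; auto). lra. }
  apply is_lim_seq_incr_1.
  apply is_lim_seq_ext with (fun N => (sin (PI * y) / (PI * y)) * / r N).
  - intros N. symmetry. assert (H := Pp_inv y Hy (S N)). unfold r.
    assert (H0 := Aw0_pos (S N)). specialize (Hne N).
    apply Rmult_eq_reg_r with (Aw (2 * y) (2 * S N) * (PI * y)); [|apply Rmult_integral_contrapositive; split; [auto| nra]].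
    transitivity (Aw (2 * y) (2 * S N) * Pp y (S N) * (PI * y)); [ring|]. rewrite H.
    field. repeat split; try lra; auto.
  - replace (Finite (sin (PI * y) / (PI * y))) with (Rbar_mult (sin (PI * y) / (PI * y)) (Rbar_inv 1)).
    + apply is_lim_seq_scal_l. apply is_lim_seq_inv; auto. intro E; injection E; lra.
    + simpl. f_equal. rewrite Rinv_1. ring.
Qed.

Lemma prprod : forall x k, 0 < x < 1 -> pr x k * pr (1 - x) k = x * (INR k + 1 - x) * (INR (fact k))^2 * Pp x k.
Proof.
  intros x k Hx. induction k.
  - simpl. ring.
  - rewrite !pr_S. 
    replace (pr x k * (x + INR (S k)) * (pr (1 - x) k * (1 - x + INR (S k)))) with
      ((pr x k * pr (1 - x) k) * ((x + INR (S k)) * (1 - x + INR (S k)))) by ring.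
    rewrite IHk. change (Pp x (S k)) with (Pp x k * (1 - x^2 / (INR (S k))^2)).
    change (fact (S k)) with (S k * fact k)%nat. rewrite mult_INR.
    rewrite S_INR. assert (0 <= INR k) by apply pos_INR. field. lra.
Qed.

Lemma Jprod : forall x n, 0 < x < 1 -> Jx x n * Jx (1 - x) n = INR (S n) / (INR (S n) + 1 - x) * / (x * Pp x (S n)).
Proof.
  intros x n Hx. unfold Jx.
  assert (HN : 1 <= INR (S n)) by apply INRS_ge1.
  assert (Hp : pw x (INR (S n)) * pw (1 - x) (INR (S n)) = INR (S n)).
  { rewrite <- pw_plus. replace (x + (1 - x)) with 1 by ring. apply pw_1. lra. }
  assert (HP := prprod x (S n) Hx).
  assert (H1 := pr_pos (S n) x ltac:(lra)). assert (H2 := pr_pos (S n) (1 - x) ltac:(lra)).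
  assert (Hf : 0 < INR (fact (S n))) by (apply lt_0_INR, lt_O_fact).
  assert (HPp : Pp x (S n) <> 0).
  { intro E. rewrite E in HP. assert (0 < pr x (S n) * pr (1 - x) (S n)) by (apply Rmult_lt_0_compat; auto). lra. }
  replace (pw x (INR (S n)) * INR (fact (S n)) / pr x (S n) * (pw (1 - x) (INR (S n)) * INR (fact (S n)) / pr (1 - x) (S n)))
    with ((pw x (INR (S n)) * pw (1 - x) (INR (S n))) * INR (fact (S n))^2 / (pr x (S n) * pr (1 - x) (S n))) by (field; lra).
  rewrite Hp, HP. field. repeat split; lra.
Qed.

Theorem reflection : forall x, 0 < x < 1 -> Gamma x * Gamma (1 - x) = PI / sin (PI * x).
Proof.
  intros x Hx.
  assert (HPI := PI_RGT_0).
  assert (Hs : 0 < sin (PI * x)) by (apply sin_gt_0; nra).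
  assert (L1 := is_lim_seq_mult' _ _ _ _ (Gamma_lim x Hx) (Gamma_lim (1 - x) ltac:(lra))).
  assert (L2 : is_lim_seq (fun n => Jx x n * Jx (1 - x) n) (PI / sin (PI * x))).
  { apply is_lim_seq_ext with (fun n => INR (S n) / (INR (S n) + 1 - x) * / (x * Pp x (S n))).
    - intros n. symmetry. apply Jprod; auto.
    - replace (PI / sin (PI * x)) with (1 * / (x * (sin (PI * x) / (PI * x)))) by (field; split; lra).
      apply is_lim_seq_mult'.
      + apply lim_from_bound with (c := 1). intros n. assert (HN := INRS_ge1 n).
        replace (INR (S n) / (INR (S n) + 1 - x) - 1) with (- ((1 - x) / (INR (S n) + 1 - x))) by (field; lra).
        rewrite Rabs_Ropp, Rabs_pos_eq by (apply Rlt_le, Rdiv_lt_0_compat; lra).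
        apply Rmult_le_reg_r with ((INR (S n) + 1 - x) * INR (S n)); [nra|].
        field_simplify; try lra. nra.
      + assert (HL := is_lim_seq_inv _ _ (is_lim_seq_scal_l _ x _ (proj1 (is_lim_seq_incr_1 _ _) (sine_prod x Hx)))).
        simpl in HL. apply HL. intro E. injection E. intro E'.
        assert (0 < x * (sin (PI * x) / (PI * x))) by (apply Rmult_lt_0_compat; [lra| apply Rdiv_lt_0_compat; nra]). lra. }
  assert (E := is_lim_seq_unique _ _ L1). rewrite (is_lim_seq_unique _ _ L2) in E.
  injection E. auto.
Qed.

Lemma ee_add : forall u v, ee (u + v) = Cmult (ee u) (ee v).
Proof.
  intros u v. unfold ee, Cmult. simpl.
  replace (2 * PI * (u + v)) with (2 * PI * u + 2 * PI * v) by ring.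
  rewrite cos_plus, sin_plus. f_equal; ring.
Qed.

Lemma ee_0 : ee 0 = RtoC 1.
Proof. unfold ee, RtoC. rewrite Rmult_0_r, cos_0, sin_0. reflexivity. Qed.

Lemma ee_1 : ee 1 = RtoC 1.
Proof. unfold ee, RtoC. rewrite Rmult_1_r, cos_2PI, sin_2PI. reflexivity. Qed.

Lemma ee_nat : forall k, ee (INR k) = RtoC 1.
Proof.
  induction k. - apply ee_0.
  - rewrite S_INR, ee_add, IHk, ee_1. apply Cmult_1_l.
Qed.

Lemma ee_IZR : forall z, ee (IZR z) = RtoC 1.
Proof.
  intros z. destruct z as [|p|p].
  - apply ee_0.
  - rewrite <- positive_nat_Z, <- INR_IZR_INZ. apply ee_nat.
  - assert (H : Cmult (ee (IZR (Z.neg p))) (ee (IZR (Z.pos p))) = RtoC 1).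
    { rewrite <- ee_add. replace (IZR (Z.neg p) + IZR (Z.pos p)) with 0. apply ee_0.
      rewrite <- plus_IZR. replace (Z.neg p + Z.pos p)%Z with 0%Z by lia. reflexivity. }
    rewrite <- positive_nat_Z, <- INR_IZR_INZ, ee_nat in H. rewrite Cmult_1_r in H. exact H.
Qed.

Lemma ee_shift : forall u z, ee (u + IZR z) = ee u.
Proof. intros. rewrite ee_add, ee_IZR. apply Cmult_1_r. Qed.

Lemma ee_pow : forall u k, Cpow (ee u) k = ee (INR k * u).
Proof.
  intros u k. induction k.
  - simpl. rewrite Rmult_0_l, ee_0. reflexivity.
  - simpl Cpow. rewrite IHk, <- ee_add. f_equal. rewrite S_INR. ring.
Qed.

Lemma Int_part_char : forall r z, IZR z <= r < IZR z + 1 -> Int_part r = z.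
Proof.
  intros r z H. unfold Int_part. rewrite <- (tech_up r (z + 1)).
  - lia.
  - rewrite plus_IZR. lra.
  - rewrite plus_IZR. lra.
Qed.

Lemma frac_char : forall r z, IZR z <= r < IZR z + 1 -> frac r = r - IZR z.
Proof. intros. unfold frac. rewrite (Int_part_char r z H). reflexivity. Qed.

Lemma frac_bounds : forall r, 0 <= frac r < 1.
Proof. intros. unfold frac. destruct (base_Int_part r). lra. Qed.

Lemma frac_decomp : forall r, r = frac r + IZR (Int_part r).
Proof. intros. unfold frac. ring. Qed.

Lemma frac_pos : forall r, (forall z, r <> IZR z) -> 0 < frac r.
Proof.
  intros r H. destruct (frac_bounds r) as [H1 _]. destruct H1 as [H1|H1]; auto.
  exfalso. apply (H (Int_part r)). rewrite (frac_decomp r) at 1. rewrite <- H1. ring.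
Qed.

Lemma frac_neg : forall r z, (forall z, r <> IZR z) -> frac (IZR z - r) = 1 - frac r.
Proof.
  intros r z H. assert (Hp := frac_pos r H). assert (Hb := frac_bounds r).
  rewrite (frac_char _ (z - Int_part r - 1)).
  - rewrite !minus_IZR. rewrite (frac_decomp r) at 1. ring.
  - rewrite !minus_IZR. rewrite (frac_decomp r) at 2 3. simpl. lra.
Qed.

Lemma cprod_ext : forall k f g, (forall l, (1 <= l <= k)%nat -> f l = g l) -> cprod k f = cprod k g.
Proof.
  induction k; intros f g H; cbn [cprod]; auto.
  rewrite (IHk f g) by (intros; apply H; lia). rewrite H by lia. reflexivity.
Qed.

Lemma cprod_mult6 : forall k f1 f2 f3 f4 f5 f6,
  cprod k (fun l => Cmult (Cmult (Cmult (Cmult (Cmult (f1 l) (f2 l)) (f3 l)) (f4 l)) (f5 l)) (f6 l)) =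
  Cmult (Cmult (Cmult (Cmult (Cmult (cprod k f1) (cprod k f2)) (cprod k f3)) (cprod k f4)) (cprod k f5)) (cprod k f6).
Proof.
  induction k; intros; cbn [cprod].
  - rewrite !Cmult_1_l. reflexivity.
  - rewrite IHk. ring.
Qed.

Lemma cprod_const : forall k r, cprod k (fun _ => RtoC r) = RtoC (r ^ k).
Proof.
  induction k; intros; cbn [cprod pow]; auto.
  rewrite IHk. unfold RtoC, Cmult. simpl. f_equal; ring.
Qed.

Lemma par_even_aux : forall m h, cprod (2 * m) (fun l => if Nat.even l then h l else RtoC 1) = cprod m (fun i => h (2 * i)%nat).
Proof.
  induction m; intros h; [reflexivity|].
  replace (2 * S m)%nat with (S (S (2 * m))) by lia. cbn [cprod]. rewrite IHm.
  replace (Nat.even (S (S (2*m)))) with true by (rewrite <- (Nat.even_even (S m)); f_equal; lia).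
  replace (Nat.even (S (2*m))) with false by (rewrite <- (Nat.even_odd m); f_equal; lia).
  replace (S (S (2 * m))) with (2 * S m)%nat by lia. rewrite Cmult_1_r. reflexivity.
Qed.

Lemma par_odd_aux : forall m h, cprod (2 * m + 1) (fun l => if Nat.odd l then h l else RtoC 1) = cprod (m + 1) (fun i => h (2 * i - 1)%nat).
Proof.
  induction m; intros h.
  - cbn [cprod]. reflexivity.
  - replace (2 * S m + 1)%nat with (S (S (2 * m + 1))) by lia.
    replace (S m + 1)%nat with (S (m + 1)) by lia. cbn [cprod]. rewrite IHm.
    replace (Nat.odd (S (S (2*m + 1)))) with true by (rewrite <- (Nat.odd_odd (S m)); f_equal; lia).
    replace (Nat.odd (S (2*m + 1))) with false by (rewrite <- (Nat.odd_even (S m)); f_equal; lia).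
    replace (2 * S (m + 1) - 1)%nat with (S (S (2 * m + 1))) by lia. rewrite Cmult_1_r. reflexivity.
Qed.

Lemma ee_sum : forall k g, ee (/2 * sum_f_R0 g k) = cprod (S k) (fun l => ee (/2 * g (l - 1)%nat)).
Proof.
  induction k; intros g.
  - cbn [cprod sum_f_R0]. rewrite Cmult_1_l. reflexivity.
  - cbn [sum_f_R0]. rewrite Rmult_plus_distr_l, ee_add, IHk.
    change (cprod (S (S k)) (fun l => ee (/2 * g (l - 1)%nat))) with
      (Cmult (cprod (S k) (fun l => ee (/2 * g (l - 1)%nat))) (ee (/2 * g (S (S k) - 1)%nat))).
    replace (S (S k) - 1)%nat with (S k) by lia. reflexivity.
Qed.

Definition sg (k : nat) : Z := if Nat.even k then 1%Z else (-1)%Z.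

Lemma pow_m1 : forall k, (-1) ^ k = IZR (sg k).
Proof.
  induction k. - reflexivity.
  - simpl pow. rewrite IHk. unfold sg. rewrite Nat.even_succ, <- Nat.negb_even.
    destruct (Nat.even k); simpl; lra.
Qed.

Lemma sg_sq : forall k, (sg k * sg k = 1)%Z.
Proof. intros. unfold sg. destruct (Nat.even k); lia. Qed.

Lemma pow_m1_sq : forall k, (-1) ^ k * (-1) ^ k = 1.
Proof. intros. rewrite pow_m1, <- mult_IZR, sg_sq. reflexivity. Qed.

Lemma dd_pos : forall a n, (forall i, (1 <= i <= n)%nat -> (2 <= a i)%nat) -> forall i, (i <= n)%nat -> (1 <= dd a i)%nat.
Proof.
  intros a n Ha i. induction i; intros Hi; simpl; [lia|].
  specialize (IHi ltac:(lia)). specialize (Ha (S i) ltac:(lia)). nia.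
Qed.

Lemma dd_split : forall a n l, (1 <= l <= n)%nat -> exists q, dd a n = (dd a (l - 1) * q)%nat /\ Nat.divide (a n) q.
Proof.
  intros a n. induction n; intros l Hl; [lia|].
  destruct (Nat.eq_dec l (S n)) as [E|E].
  - subst l. exists (a (S n)). simpl. replace (n - 0)%nat with n by lia. split; [reflexivity| apply Nat.divide_refl].
  - destruct (IHn l ltac:(lia)) as [q [Hq _]]. exists (q * a (S n))%nat. split.
    + simpl. rewrite Hq. ring.
    + apply Nat.divide_factor_r.
Qed.

Section Omega.
Variable a : nat -> nat.
Variable n kappa : nat.
Hypothesis Ha : forall i, (1 <= i <= n)%nat -> (2 <= a i)%nat.
Hypothesis Hn : (1 <= n)%nat.
Hypothesis Hk : (1 <= kappa <= dd a n)%nat.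
Hypothesis Hdiv : ~ Nat.divide (a n) kappa.

Definition sv (k l : nat) : R := (-1) ^ (l - 1) * INR (dd a (l - 1)) / INR (dd a n) * INR k.

Lemma D_pos : 0 < INR (dd a n).
Proof. apply lt_0_INR. assert (H := dd_pos a n Ha n (le_n n)). lia. Qed.

Lemma d_pos : forall l, (l <= n)%nat -> 0 < INR (dd a l).
Proof. intros. apply lt_0_INR. assert (H0 := dd_pos a n Ha l H). lia. Qed.

Lemma sv_nonint : forall l, (1 <= l <= n)%nat -> forall z, sv kappa l <> IZR z.
Proof.
  intros l Hl z E. destruct (dd_split a n l Hl) as [q [Hq Hdq]].
  assert (Hd := d_pos (l - 1) ltac:(lia)). assert (HD := D_pos).
  unfold sv in E. rewrite Hq, mult_INR in E.
  assert (Hq0 : 0 < INR q) by (rewrite Hq, mult_INR in HD; nra).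
  assert (E2 : INR kappa = IZR (sg (l - 1) * z) * INR q).
  { rewrite mult_IZR, <- pow_m1, <- E.
    transitivity (((-1) ^ (l - 1) * (-1) ^ (l - 1)) * INR kappa); [rewrite pow_m1_sq; ring|]. field. lra. }
  rewrite !INR_IZR_INZ, <- mult_IZR in E2. apply eq_IZR in E2.
  apply Hdiv. apply Nat.divide_trans with q; auto.
  set (w := (sg (l - 1) * z)%Z) in E2.
  assert (Hq1 : (1 <= q)%nat) by (destruct q; [simpl in Hq0; lra| lia]).
  assert (Hw : (0 <= w)%Z) by nia.
  exists (Z.to_nat w). apply Nat2Z.inj. rewrite Nat2Z.inj_mul, Z2Nat.id by auto. lia.
Qed.

Lemma om_bounds : forall l, (1 <= l <= n)%nat -> 0 < omega a n kappa l < 1.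
Proof.
  intros l Hl. unfold omega. fold (sv kappa l). split.
  - apply frac_pos. intros z. apply sv_nonint; auto.
  - apply frac_bounds.
Qed.

Lemma om_comp : forall l, (1 <= l <= n)%nat -> omega a n (dd a n - kappa) l = 1 - omega a n kappa l.
Proof.
  intros l Hl. unfold omega. fold (sv (dd a n - kappa) l). fold (sv kappa l).
  assert (HD := D_pos).
  replace (sv (dd a n - kappa) l) with (IZR (sg (l - 1) * Z.of_nat (dd a (l - 1))) - sv kappa l).
  - apply frac_neg. intros z. apply sv_nonint; auto.
  - unfold sv. rewrite minus_INR by lia. rewrite mult_IZR, <- pow_m1, <- INR_IZR_INZ. field. lra.
Qed.

Lemma kappa_lt : (kappa < dd a n)%nat.
Proof.
  destruct (Nat.eq_dec kappa (dd a n)) as [E|E]; [|lia].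
  exfalso. apply Hdiv. rewrite E. destruct n as [|n']; [lia|]. simpl. apply Nat.divide_factor_r.
Qed.

Lemma om_1 : omega a n kappa 1 = INR kappa / INR (dd a n).
Proof.
  unfold omega. assert (HD := D_pos). assert (Hlt := kappa_lt).
  replace ((-1) ^ (1 - 1) * INR (dd a (1 - 1)) / INR (dd a n) * INR kappa) with (INR kappa / INR (dd a n)) by (simpl; field; lra).
  rewrite (frac_char _ 0).
  - simpl. ring.
  - simpl. split.
    + apply Rlt_le, Rdiv_lt_0_compat; [apply lt_0_INR; lia| lra].
    + apply Rmult_lt_reg_r with (INR (dd a n)); auto. field_simplify; [|lra]. apply lt_INR in Hlt. lra.
Qed.

Lemma cpow_rel : forall i, (1 <= i <= n)%nat ->
  Cpow (ee ((-1) ^ (n - 1) * omega a n kappa 1)) (dd a (i - 1)) = ee ((-1) ^ (n - i) * omega a n kappa i).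
Proof.
  intros i Hi. rewrite ee_pow, om_1. assert (HD := D_pos).
  unfold omega. fold (sv kappa i).
  set (I := Int_part (sv kappa i)).
  replace (INR (dd a (i - 1)) * ((-1) ^ (n - 1) * (INR kappa / INR (dd a n))))
    with ((-1) ^ (n - i) * frac (sv kappa i) + IZR (sg (n - i) * I)).
  - rewrite ee_shift. reflexivity.
  - rewrite mult_IZR, <- pow_m1. unfold frac. fold I. unfold sv.
    replace (n - 1)%nat with ((n - i) + (i - 1))%nat by lia. rewrite pow_add.
    field. lra.
Qed.
End Omega.

Lemma one_m_ee_neq : forall w, 0 < w < 1 -> Cminus (RtoC 1) (ee (- w)) <> RtoC 0.
Proof.
  intros w Hw E. assert (HPI := PI_RGT_0).
  assert (Hs : 0 < sin (PI * w)) by (apply sin_gt_0; nra).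
  apply (f_equal fst) in E. unfold ee, Cminus, RtoC in E. simpl in E.
  replace (2 * PI * - w) with (- (2 * (PI * w))) in E by ring.
  rewrite cos_neg, cos_2a_sin in E. nra.
Qed.

Lemma factor_id : forall w, 0 < w < 1 ->
  Cmult (Cmult (Cmult (RtoC (/ (2 * PI))) (RtoC (Gamma (1 - w)))) (RtoC (Gamma w))) (ee (/ 2 * (w - / 2)))
  = Cinv (Cminus (RtoC 1) (ee (- w))).
Proof.
  intros w Hw. assert (HPI := PI_RGT_0).
  assert (Hs : 0 < sin (PI * w)) by (apply sin_gt_0; nra).
  assert (HR := reflection w Hw).
  rewrite <- !RtoC_mult.
  replace (/ (2 * PI) * Gamma (1 - w) * Gamma w) with (/ (2 * sin (PI * w))).
  2:{ replace (/ (2 * PI) * Gamma (1 - w) * Gamma w) with (/ (2 * PI) * (Gamma w * Gamma (1 - w))) by ring.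
      rewrite HR. field. lra. }
  unfold ee, Cminus, Cinv, Cmult, RtoC. simpl.
  replace (2 * PI * (/ 2 * (w - / 2))) with (- (PI / 2 - PI * w)) by field.
  replace (2 * PI * - w) with (- (2 * (PI * w))) by ring.
  rewrite cos_neg, sin_neg, cos_shift, sin_shift, cos_neg, sin_neg, cos_2a_sin, sin_2a.
  set (s := sin (PI * w)). set (c := cos (PI * w)).
  assert (Hsc : s * s + c * c = 1) by (unfold s, c; assert (H := sin2_cos2 (PI * w)); unfold Rsqr in H; lra).
  replace ((1 + - (1 - 2 * s * s)) * ((1 + - (1 - 2 * s * s)) * 1) +
   (0 + - - (2 * s * c)) * ((0 + - - (2 * s * c)) * 1)) with (4 * (s * s)).
  2:{ transitivity (4 * (s * s) * (s * s + c * c)); [rewrite Hsc; ring| ring]. }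
  assert (s <> 0) by (unfold s; lra). f_equal; field; auto.
Qed.

Lemma parity : forall n (h : nat -> C),
  (if Nat.odd n then cprod ((n + 1) / 2) (fun i => h (2 * i - 1)%nat) else cprod (n / 2) (fun i => h (2 * i)%nat))
  = cprod n (fun l => if Nat.even (n - l) then h l else RtoC 1).
Proof.
  intros n h. destruct (Nat.Even_or_Odd n) as [[m Hm]|[m Hm]]; subst n.
  - rewrite Nat.odd_even. rewrite (Nat.mul_comm 2 m), Nat.div_mul by lia. rewrite Nat.mul_comm.
    rewrite <- par_even_aux. apply cprod_ext. intros l Hl.
    rewrite Nat.even_sub by lia. rewrite Nat.even_even. destruct (Nat.even l); reflexivity.
  - rewrite Nat.odd_odd. replace ((2 * m + 1 + 1) / 2)%nat with (m + 1)%nat.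
    2:{ replace (2 * m + 1 + 1)%nat with ((m + 1) * 2)%nat by lia. rewrite Nat.div_mul by lia. reflexivity. }
    rewrite <- par_odd_aux. apply cprod_ext. intros l Hl.
    rewrite Nat.even_sub by lia. rewrite Nat.even_odd, <- Nat.negb_odd. destruct (Nat.odd l); reflexivity.
Qed.

Theorem lemma4p1 (a : nat -> nat) (n kappa : nat)
  (Ha : forall i, (1 <= i <= n)%nat -> (2 <= a i)%nat)
  (Hn : (1 <= n)%nat)
  (Hk : (1 <= kappa <= dd a n)%nat)
  (Hdiv : ~ Nat.divide (a n) kappa) :
  Cmult (Cmult (Cmult (Cmult (RtoC (/ (2 * PI) ^ n)) (cc a n kappa))
      (ee (/ 2 * sum_f_R0 (fun j => omega a n kappa (S j) - / 2) (n - 1))))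
      (RtoC (/ INR (dd a n))))
    (cc a n (dd a n - kappa))
  = Cmult (RtoC (/ INR (dd a n)))
      (pp a n (ee ((-1) ^ (n - 1) * omega a n kappa 1))).
Proof.
  assert (HPI := PI_RGT_0).
  assert (Hw : forall l, (1 <= l <= n)%nat -> 0 < omega a n kappa l < 1) by (intros; apply (om_bounds a n kappa); auto).
  assert (HC2 : RtoC (/ (2 * PI) ^ n) = cprod n (fun _ => RtoC (/ (2 * PI)))).
  { rewrite cprod_const, pow_inv. reflexivity. }
  assert (HE : ee (/ 2 * sum_f_R0 (fun j => omega a n kappa (S j) - / 2) (n - 1)) = cprod n (fun l => ee (/ 2 * (omega a n kappa l - / 2)))).
  { destruct n as [|k]; [lia|]. replace (S k - 1)%nat with k by lia. rewrite ee_sum.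
    apply cprod_ext. intros l Hl. replace (S (l - 1)) with l by lia. reflexivity. }
  assert (Hcc1 : cc a n kappa = Cmult (cprod n (fun l => RtoC (Gamma (1 - omega a n kappa l))))
                                    (cprod n (fun l => if Nat.even (n - l) then Cminus (RtoC 1) (ee (omega a n kappa l)) else RtoC 1))).
  { unfold cc. rewrite (parity n (fun l => Cminus (RtoC 1) (ee (omega a n kappa l)))). reflexivity. }
  assert (Hcc2 : cc a n (dd a n - kappa) = Cmult (cprod n (fun l => RtoC (Gamma (omega a n kappa l))))
                                    (cprod n (fun l => if Nat.even (n - l) then Cminus (RtoC 1) (ee (- omega a n kappa l)) else RtoC 1))).
  { unfold cc. rewrite (parity n (fun l => Cminus (RtoC 1) (ee (omega a n (dd a n - kappa) l)))). f_equal.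
    - apply cprod_ext. intros l Hl. rewrite (om_comp a n kappa) by auto. f_equal. f_equal. ring.
    - apply cprod_ext. intros l Hl. rewrite (om_comp a n kappa) by auto.
      replace (1 - omega a n kappa l) with (- omega a n kappa l + IZR 1) by (simpl; ring). rewrite ee_shift. reflexivity. }
  rewrite HC2, HE, Hcc1, Hcc2.
  match goal with |- _ = Cmult ?D _ => set (Dinv := D) end.
  transitivity (Cmult Dinv (Cmult (Cmult (Cmult (Cmult (Cmult
     (cprod n (fun _ => RtoC (/ (2 * PI))))
     (cprod n (fun l => RtoC (Gamma (1 - omega a n kappa l)))))
     (cprod n (fun l => RtoC (Gamma (omega a n kappa l)))))
     (cprod n (fun l => ee (/ 2 * (omega a n kappa l - / 2)))))
     (cprod n (fun l => if Nat.even (n - l) then Cminus (RtoC 1) (ee (omega a n kappa l)) else RtoC 1)))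
     (cprod n (fun l => if Nat.even (n - l) then Cminus (RtoC 1) (ee (- omega a n kappa l)) else RtoC 1)))).
  { ring. }
  rewrite <- cprod_mult6. f_equal. unfold pp. apply cprod_ext. intros l Hl. cbv beta zeta.
  rewrite (cpow_rel a n kappa Ha Hn Hk Hdiv l Hl).
  rewrite (factor_id (omega a n kappa l) (Hw l Hl)).
  assert (Hne := one_m_ee_neq (omega a n kappa l) (Hw l Hl)).
  rewrite pow_m1. unfold sg. destruct (Nat.even (n - l)).
  - replace (IZR 1 * omega a n kappa l) with (omega a n kappa l) by (simpl; ring).
    field. auto.
  - rewrite !Cmult_1_r. replace (IZR (-1) * omega a n kappa l) with (- omega a n kappa l) by (simpl; ring). reflexivity.
Qed.
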